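(* Let $R,K$ be positive integers, $m=RK$, $p\in[0,1]$. In a serial-star network with $R$ branches of $K$ sensors, let $\mathcal{T}$ be the random set of measurements reaching the fusion center. Write $$h(x)=\left[\frac{1-p+p^{K+1}x^K(1-x)}{1-px}\right]^R=\sum_{i=0}^m d_i x^i$$ (a polynomial in $x$). Then $\mathbb{P}\{|\mathcal{T}|=i\}=d_i$ for every $i=0,1,\ldots,m$.
   Context: Serial-star network: in each of the $R$ branches, sensor $j$ ($j=1,\ldots,K$) forwards all measurements it holds (its own plus those received from sensor $j-1$) to sensor $j+1$, and sensor $K$ forwards to the fusion center. Each of the $RK$ links is an independent Bernoulli erasure channel that delivers the transmitted data with probability $p$ and loses it otherwise; hence the measurement of sensor $j$ in a branch reaches the fusion center iff all $K-j+1$ links from sensor $j$ to the fusion center succeed. *)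

(* Defs.v *)
From HB Require Import structures.
From mathcomp Require Import all_boot all_order all_algebra.
Set Implicit Arguments. Unset Strict Implicit. Unset Printing Implicit Defensive.
Import Order.TTheory GRing.Theory Num.Theory.
Local Open Scope ring_scope.

(* Link (r, j) (0-indexed,
   j : 'I_K) is the link leaving sensor j of branch r (towards sensor j+1, or
   towards the fusion center when j = K-1).  An outcome of the RK independent
   Bernoulli erasure channels is a boolean configuration (true = delivered). *)
Definition config (R K : nat) := {ffun 'I_R * 'I_K -> bool}.

Definition weight (F : ringType) (R K : nat) (p : F) (w : config R K) : F :=
  \prod_(l : 'I_R * 'I_K) (if w l then p else 1 - p).

(* Measurement of sensor s = (r, j) reaches the fusion center iff all links
   from sensor j to the fusion center (links j, ..., K-1 of branch r) succeed. *)
Definition reaches (R K : nat) (w : config R K) (s : 'I_R * 'I_K) : bool :=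
  [forall l : 'I_K, (s.2 <= l)%N ==> w (s.1, l)].

Definition received (R K : nat) (w : config R K) : {set 'I_R * 'I_K} :=
  [set s | reaches w s].

Definition prob_card (F : ringType) (R K : nat) (p : F) (i : nat) : F :=
  \sum_(w : config R K | #|received w| == i) weight p w.

(* Main.v *)
Require Import Defs.
From HB Require Import structures.
From mathcomp Require Import all_boot all_order all_algebra.
From mathcomp Require Import ring lra.
Import Order.TTheory GRing.Theory Num.Theory.
Set Implicit Arguments. Unset Strict Implicit. Unset Printing Implicit Defensive.
Local Open Scope ring_scope.

Section Branch.
Variables (F : realFieldType) (p x : F).

Definition wt K (v : {ffun 'I_K -> bool}) : F :=
  \prod_(j < K) (if v j then p else 1 - p).
Definition cnt K (v : {ffun 'I_K -> bool}) : nat :=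
  \sum_(j < K) [forall l : 'I_K, (j <= l)%N ==> v l].
Definition S K := \sum_(v : {ffun 'I_K -> bool}) wt v * x ^+ cnt v.

Definition consf K (b : bool) (g : {ffun 'I_K -> bool}) : {ffun 'I_K.+1 -> bool} :=
  [ffun i : 'I_K.+1 => if unlift ord0 i is Some j then g j else b].

Lemma sum_ffunS K (G : {ffun 'I_K.+1 -> bool} -> F) :
  \sum_v G v = \sum_(b : bool) \sum_(g : {ffun 'I_K -> bool}) G (consf b g).
Proof.
rewrite pair_big /=.
rewrite (reindex (fun bg : bool * {ffun 'I_K -> bool} => consf bg.1 bg.2)) //.
apply: onW_bij.
exists (fun v : {ffun 'I_K.+1 -> bool} => (v ord0, [ffun j => v (lift ord0 j)])).
- move=> [b g] /=; rewrite !ffunE unlift_none; congr pair.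
  by apply/ffunP=> j; rewrite !ffunE liftK.
- move=> v; apply/ffunP => i; rewrite !ffunE.
  by case: unliftP => [j ->|->] /=; rewrite ?ffunE.
Qed.

Lemma forallS K (P : 'I_K.+1 -> bool) :
  [forall l, P l] = P ord0 && [forall l : 'I_K, P (lift ord0 l)].
Proof.
apply/forallP/andP => [h|[h0 /forallP h] l]; first by split => //; apply/forallP.
by case: (unliftP ord0 l) => [j ->|->].
Qed.

Lemma cnt_cons K b (g : {ffun 'I_K -> bool}) :
  cnt (consf b g) = ((b && [forall l, g l]) + cnt g)%N.
Proof.
rewrite /cnt big_ord_recl forallS /= !ffunE unlift_none /=.
congr (nat_of_bool _ + _)%N.
  by congr andb; apply: eq_forallb => l; rewrite ffunE liftK.
apply: eq_bigr => j _; rewrite forallS /=.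
congr (nat_of_bool _); apply: eq_forallb => l; rewrite ffunE liftK /bump /= !add1n ltnS.
by [].
Qed.

Lemma wt_cons K b (g : {ffun 'I_K -> bool}) :
  wt (consf b g) = (if b then p else 1 - p) * wt g.
Proof.
rewrite /wt big_ord_recl !ffunE unlift_none; congr (_ * _).
by apply: eq_bigr => j _; rewrite ffunE liftK.
Qed.

Lemma allT K (g : {ffun 'I_K -> bool}) : [forall l, g l] = (g == [ffun=> true]).
Proof.
apply/forallP/eqP => [h|-> l]; last by rewrite ffunE.
by apply/ffunP => l; rewrite ffunE h.
Qed.

Lemma S_rec K : S K.+1 = S K + (x - 1) * p ^+ K.+1 * x ^+ K.
Proof.
rewrite /S sum_ffunS big_bool /=.
under eq_bigr do rewrite wt_cons cnt_cons /=.
under [X in _ + X = _]eq_bigr do rewrite wt_cons cnt_cons /=.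
have E : forall g : {ffun 'I_K -> bool},
  p * wt g * x ^+ ([forall l, g l] + cnt g) =
  p * (wt g * x ^+ cnt g) + [forall l, g l]%:R * ((x - 1) * p * wt g * x ^+ cnt g).
  move=> g; case: [forall l, g l] => /=; rewrite ?exprS /=; ring.
under eq_bigr do rewrite E.
rewrite big_split /= -mulr_sumr.
rewrite [X in _ + X + _](bigD1 [ffun=> true]) //=.
rewrite [X in _ + (_ + X) + _]big1; last first.
  by move=> g; rewrite -allT => /negbTE ->; rewrite mul0r.
rewrite allT eqxx mul1r addr0.
have -> : wt (K:=K) [ffun=> true] = p ^+ K.
  rewrite /wt; under eq_bigr do rewrite ffunE.
  by rewrite prodr_const card_ord.
have -> : cnt (K:=K) [ffun=> true] = K.
  rewrite /cnt; under eq_bigr => j _.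
    have -> : [forall l : 'I_K, (j <= l)%N ==> [ffun=> true] l] = true.
      by apply/forallP => l; rewrite ffunE implybT.
    over.
  by rewrite sum_nat_const card_ord muln1.
set A := \sum_(g : {ffun 'I_K -> bool}) _.
have -> : \sum_(g : {ffun 'I_K -> bool}) (1 - p) * wt g * x ^+ (0 + cnt g) = (1 - p) * A.
  by rewrite mulr_sumr; apply: eq_bigr => g _; rewrite add0n mulrA.
rewrite exprS; ring.
Qed.

Lemma S0 : S 0 = 1.
Proof.
rewrite /S; under eq_bigr => v _.
  rewrite /wt /cnt !big_ord0 mul1r expr0. over.
by rewrite sumr_const card_ffun card_ord card_bool expn0.
Qed.

Lemma S_closed K : S K * (1 - p * x) = 1 - p + p ^+ K.+1 * x ^+ K * (1 - x).
Proof.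
elim: K => [|K IH]; first by rewrite S0; ring.
rewrite S_rec mulrDl IH !exprS; ring.
Qed.

End Branch.

Definition curryw R K (w : config R K) : {ffun 'I_R -> {ffun 'I_K -> bool}} :=
  [ffun r => [ffun j => w (r, j)]].

Lemma factor (F : realFieldType) (p x : F) R K :
  \sum_(w : config R K) weight p w * x ^+ #|received w| = (S p x K) ^+ R.
Proof.
have -> : S p x K ^+ R = \prod_(r < R) S p x K by rewrite prodr_const card_ord.
rewrite /S bigA_distr_bigA /=.
rewrite (reindex (@curryw R K)) /=; last first.
  apply: onW_bij.
  exists (fun g : {ffun 'I_R -> {ffun 'I_K -> bool}} => [ffun l : 'I_R * 'I_K => g l.1 l.2] : config R K).
  - by move=> w; apply/ffunP => -[r j]; rewrite !ffunE.
  - by move=> g; apply/ffunP => r; apply/ffunP => j; rewrite !ffunE.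
apply: eq_bigr => w _.
rewrite big_split /=; congr (_ * _).
  rewrite /weight /wt pair_big /=; apply: eq_bigr => -[r j] _.
  by rewrite !ffunE.
rewrite prodrXr; congr (_ ^+ _).
rewrite -sum1_card big_mkcond /= pair_big /=.
apply: eq_bigr => -[r j] _ /=.
rewrite /received inE /reaches /=.
have -> : [forall l : 'I_K, (j <= l)%N ==> curryw w r l] = [forall l : 'I_K, (j <= l)%N ==> w (r, l)].
  by apply: eq_forallb => l; rewrite !ffunE.
by case: [forall l : 'I_K, _].
Qed.

Theorem lemma4 (F : realFieldType) (R K : nat) (p : F) (d : nat -> F) :
  (0 < R)%N -> (0 < K)%N -> 0 <= p <= 1 ->
  (forall x : F, 1 - p * x != 0 ->
     ((1 - p + p ^+ K.+1 * x ^+ K * (1 - x)) / (1 - p * x)) ^+ R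
       = \sum_(0 <= i < (R * K).+1) d i * x ^+ i) ->
  forall i : nat, (i <= R * K)%N -> prob_card R K p i = d i.
Proof.
move=> _ _ /andP[p0 p1] hyp i hi.
set Pp := \sum_(w : config R K) weight p w *: 'X^#|received w|.
set D := \poly_(i < (R * K).+1) d i.
have key : forall x, 1 - p * x != 0 -> D.[x] = Pp.[x].
  move=> x hx.
  rewrite horner_poly; have := hyp x hx; rewrite big_mkord => <-; rewrite horner_sum.
  under eq_bigr do rewrite hornerZ hornerXn.
  by rewrite factor -(S_closed p x K) mulfK.
have DP : D = Pp.
  apply/eqP; rewrite -subr_eq0; apply/negPn/negP => Hne.
  set rs := [seq - (k%:R : F) | k <- iota 0 (size (D - Pp))].
  have Hall : all (root (D - Pp)) rs.
    apply/allP => y /mapP [k _ ->]; rewrite /root hornerD hornerN key ?subrr //.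
    rewrite mulrN opprK; apply: lt0r_neq0.
    have h : 0 <= p * k%:R by apply: mulr_ge0.
    lra.
  have Hu : uniq rs.
    rewrite map_inj_uniq ?iota_uniq // => a b /eqP.
    by rewrite eqr_opp eqr_nat => /eqP.
  have := max_poly_roots Hne Hall Hu.
  by rewrite size_map size_iota ltnn.
have := congr1 (fun P : {poly F} => P`_i) DP.
rewrite /D coef_poly ltnS hi => ->.
rewrite /Pp coef_sum /prob_card big_mkcond /=.
apply: eq_bigr => w _; rewrite coefZ coefXn eq_sym.
by case: (_ == _); rewrite ?mulr1 ?mulr0.
Qed.
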